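(* Let $k>0$ and consider the case $\Lambda=1$. The minimum of $(\Delta\bm{x})^2$ over all unit vectors of the $3$-dimensional space $\mathcal{H}_1$ equals $\frac{7}{32}$, and it is attained at $$\underline{\bm{\chi}}=\frac{\sqrt5}{4}\left(\psi_{-1}+\psi_1\right)+\sqrt{\tfrac38}\,\psi_0 .$$
   Context: (Fuzzy circle $S^1_\Lambda$ with $\Lambda=1$.) $\mathcal{H}_1$ has orthonormal basis $\psi_{-1},\psi_0,\psi_1$. Operators: $x_+\psi_n=b_{n+1}\psi_{n+1}$, $x_-\psi_n=b_n\psi_{n-1}$ where $b_n=\sqrt{1+n(n-1)/k}$ for $n\in\{0,1\}$ and $b_n=0$ otherwise (so $b_0=b_1=1$, $b_{-1}=b_2=0$); $x_1=(x_++x_-)/2$, $x_2=(x_+-x_-)/(2i)$, $\bm{x}^2=x_1^2+x_2^2$. For a unit vector $\bm{\chi}$, $\langle A\rangle=\langle\bm{\chi},A\bm{\chi}\rangle$ and $(\Delta\bm{x})^2=\langle\bm{x}^2\rangle-\langle x_1\rangle^2-\langle x_2\rangle^2$. *)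

(* Defs.v *)
From HB Require Import structures.
From mathcomp Require Import all_boot all_order all_algebra.
From mathcomp Require Import complex.
Set Implicit Arguments. Unset Strict Implicit. Unset Printing Implicit Defensive.
Import Order.TTheory GRing.Theory Num.Theory.
Local Open Scope complex_scope.
Local Open Scope ring_scope.

Section FuzzyCircle.
Variable R : rcfType.
Local Notation C := R[i].

(* H_1 = C^3 with orthonormal basis psi_{-1}, psi_0, psi_1; index i : 'I_3 *)
Definition idx (i : 'I_3) : int := (i%:Z - 1)%R.

Definition bcoef (k : R) (n : int) : R :=
  if (n == 0) || (n == 1) then Num.sqrt (1 + (n%:~R * (n%:~R - 1)) / k) else 0.

Definition xplus (k : R) : 'M[C]_3 :=
  \matrix_(m < 3, j < 3)
    (if idx m == idx j + 1 then (bcoef k (idx j + 1))%:C else 0).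

Definition xminus (k : R) : 'M[C]_3 :=
  \matrix_(m < 3, j < 3)
    (if idx m == idx j - 1 then (bcoef k (idx j))%:C else 0).

Definition x1 (k : R) : 'M[C]_3 := (2%:R)^-1 *: (xplus k + xminus k).
Definition x2 (k : R) : 'M[C]_3 := (2%:R * 'i)^-1 *: (xplus k - xminus k).
Definition xsq (k : R) : 'M[C]_3 := x1 k *m x1 k + x2 k *m x2 k.

Definition expect (A : 'M[C]_3) (chi : 'cV[C]_3) : C :=
  \sum_(i < 3) \sum_(j < 3) conjc (chi i 0) * A i j * chi j 0.

Definition unit_vec (chi : 'cV[C]_3) : Prop :=
  \sum_(i < 3) conjc (chi i 0) * chi i 0 = 1.

Definition uncert (k : R) (chi : 'cV[C]_3) : C :=
  expect (xsq k) chi - (expect (x1 k) chi) ^+ 2 - (expect (x2 k) chi) ^+ 2.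

Definition chi_min : 'cV[C]_3 :=
  \col_(i < 3)
    (if idx i == 0 then (Num.sqrt (3%:R / 8%:R))%:C
     else (Num.sqrt 5%:R / 4%:R)%:C).

End FuzzyCircle.

(* Main.v *)
Require Import Defs.
From HB Require Import structures.
From mathcomp Require Import all_boot all_order all_algebra.
From mathcomp Require Import complex ring lra.
Import Order.TTheory GRing.Theory Num.Theory.
Local Open Scope complex_scope.
Local Open Scope ring_scope.

Section S.
Variable R : rcfType.
Local Notation C := R[i].

Lemma b1 (k : R) n : bcoef k n = if (n == 0) || (n == 1) then 1 else 0.
Proof.
rewrite /bcoef; case: ifP => // /orP[]/eqP->; by rewrite ?mul0r ?subrr ?mulr0 ?mul0r ?addr0 sqrtr1.
Qed.

Definition P : 'M[C]_3 := \matrix_(m < 3, j < 3) (if (m:nat) == j.+1 then 1 else 0).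
Definition M : 'M[C]_3 := \matrix_(m < 3, j < 3) (if (j:nat) == m.+1 then 1 else 0).

Lemma xplusE (k : R) : xplus k = P.
Proof.
apply/matrixP => i j; rewrite !mxE b1.
case: i => [[|[|[|?]]] ?]; case: j => [[|[|[|?]]] ?] //=.
Qed.

Lemma xminusE (k : R) : xminus k = M.
Proof.
apply/matrixP => i j; rewrite !mxE b1.
case: i => [[|[|[|?]]] ?]; case: j => [[|[|[|?]]] ?] //=.
Qed.

Lemma sum3 (F : 'I_3 -> C) : \sum_(i < 3) F i = F ord0 + F (lift ord0 ord0) + F (lift ord0 (lift ord0 ord0)).
Proof. by rewrite !big_ord_recl big_ord0 addr0 addrA. Qed.

Lemma expectD (A B : 'M[C]_3) (chi : 'cV[C]_3) : expect (A + B) chi = expect A chi + expect B chi.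
Proof. rewrite /expect -big_split; apply: eq_bigr => i _; rewrite -big_split; apply: eq_bigr => j _.
by rewrite mxE mulrDr mulrDl. Qed.
Lemma expectN (A : 'M[C]_3) (chi : 'cV[C]_3) : expect (- A) chi = - expect A chi.
Proof. rewrite /expect -sumrN; apply: eq_bigr => i _; rewrite -sumrN; apply: eq_bigr => j _.
by rewrite mxE mulrN mulNr. Qed.
Lemma expectZ s (A : 'M[C]_3) (chi : 'cV[C]_3) : expect (s *: A) chi = s * expect A chi.
Proof. rewrite /expect mulr_sumr; apply: eq_bigr => i _; rewrite mulr_sumr; apply: eq_bigr => j _.
by rewrite mxE mulrCA !mulrA. Qed.

Lemma PM : P *m M = \matrix_(m < 3, j < 3) (if (m == j) && (m != 0 :> nat) then 1 else 0).
Proof.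
apply/matrixP => i j; rewrite !mxE sum3 !mxE.
case: i => [[|[|[|?]]] ?]; case: j => [[|[|[|?]]] ?] //=; by rewrite ?mul0r ?mulr0 ?mul1r ?addr0 ?add0r.
Qed.
Lemma MP : M *m P = \matrix_(m < 3, j < 3) (if (m == j) && (m != 2 :> nat) then 1 else 0).
Proof.
apply/matrixP => i j; rewrite !mxE sum3 !mxE.
case: i => [[|[|[|?]]] ?]; case: j => [[|[|[|?]]] ?] //=; by rewrite ?mul0r ?mulr0 ?mul1r ?addr0 ?add0r.
Qed.


Lemma xsqE k : xsq k = ((2%:R)^-1 * (2%:R)^-1) *: ((P+M)*m(P+M)) + ((2%:R * 'i)^-1 * (2%:R * 'i)^-1) *: ((P-M)*m(P-M)) :> 'M[C]_3.
Proof. by rewrite /xsq /x1 /x2 xplusE xminusE -!scalemxAl -!scalemxAr !scalerA. Qed.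

Lemma jsq : (2%:R * 'i)^-1 * (2%:R * 'i)^-1 = - ((2%:R)^-1 * (2%:R)^-1) :> C.
Proof.
have ii : ('i * 'i : C) = -1.
  by apply/eqP; rewrite eq_complex /=; apply/andP; split; apply/eqP; ring.
by rewrite -!invfM mulrACA ii mulrN1 invrN.
Qed.

Variable chi : 'cV[C]_3.
Local Notation a := (chi ord0 0).
Local Notation b := (chi (lift ord0 ord0) 0).
Local Notation c := (chi (lift ord0 (lift ord0 ord0)) 0).

Lemma eP : expect P chi = conjc b * a + conjc c * b.
Proof. rewrite /expect !sum3 !mxE /=. by rewrite !mulr0 !mul0r !mulr1 !addr0 !add0r. Qed.
Lemma eM : expect M chi = conjc a * b + conjc b * c.
Proof. rewrite /expect !sum3 !mxE /=. by rewrite !mulr0 !mul0r !mulr1 !addr0 !add0r. Qed.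
Lemma ePM : expect (P *m M) chi = conjc b * b + conjc c * c.
Proof. rewrite PM /expect !sum3 !mxE /=. by rewrite !mulr0 !mul0r !mulr1 !addr0 !add0r. Qed.
Lemma eMP : expect (M *m P) chi = conjc a * a + conjc b * b.
Proof. rewrite MP /expect !sum3 !mxE /=. by rewrite !mulr0 !mul0r !mulr1 !addr0 !add0r. Qed.

Lemma uncertE k : uncert k chi = (conjc a * a + 2%:R * conjc b * b + conjc c * c) / 2%:R
   - (conjc b * a + conjc c * b) * (conjc a * b + conjc b * c).
Proof.
rewrite /uncert xsqE /x1 /x2 xplusE xminusE !(expectD, expectZ, expectN).
rewrite !(mulmxDl, mulmxDr, mulmxN, mulNmx) !(expectD, expectN) eP eM ePM eMP.
rewrite !exprMn expr2 [(2%:R * 'i)^-1 ^+ 2]expr2 jsq.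
by field.
Qed.


Lemma inv2C : (2%:R : C)^-1 = (2^-1 : R)%:C.
Proof. by rewrite fmorphV rmorph_nat. Qed.
Lemma twoC : (2%:R : C) = (2%:R : R)%:C.
Proof. by rewrite rmorph_nat. Qed.

Lemma part3 k : unit_vec chi -> (7%:R / 32%:R)%:C <= uncert k chi.
Proof.
rewrite /unit_vec sum3 uncertE inv2C twoC.
move: (chi ord0 0) (chi (lift ord0 ord0) 0) (chi (lift ord0 (lift ord0 ord0)) 0) => [ar ai] [br bi] [cr ci].
move/eqP; rewrite eq_complex /= => /andP[/eqP h1 /eqP h2].
rewrite lecE /=. apply/andP; split.
  by apply/eqP; field.
have hN : (ar*ar+ai*ai+br*br+bi*bi+cr*cr+ci*ci - 1) * (2^-1 - 2%:R*(br*br+bi*bi)) = 0.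
  have -> : ar*ar+ai*ai+br*br+bi*bi+cr*cr+ci*ci - 1 = 0 by rewrite -h1; ring.
  by rewrite mul0r.
have s1 : 0 <= (br*br+bi*bi - 3%:R/8%:R)^+2 by apply: sqr_ge0.
have s2 : 0 <= ((br * ar + bi * ai) - (cr * br + ci * bi))^+2 by apply: sqr_ge0.
have s3 : 0 <= ((br * ai - bi * ar) - (cr * bi - ci * br))^+2 by apply: sqr_ge0.
nra.
Qed.


End S.

Lemma part12 (R : rcfType) (k : R) : unit_vec (chi_min R) /\ uncert k (chi_min R) = (7%:R / 32%:R)%:C.
Proof.
have h5 : Num.sqrt (5%:R : R) * Num.sqrt 5%:R = 5%:R by rewrite -expr2 sqr_sqrtr // ler0n.
have h38 : Num.sqrt (3%:R / 8%:R : R) * Num.sqrt (3%:R / 8%:R) = 3%:R / 8%:R.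
  by rewrite -expr2 sqr_sqrtr // divr_ge0 // ler0n.
split.
  rewrite /unit_vec sum3 !mxE /=.
  apply/eqP; rewrite eq_complex /=; apply/andP; split; apply/eqP.
    by lra.
  by lra.
rewrite uncertE !mxE /= inv2C twoC.
apply/eqP; rewrite eq_complex /=; apply/andP; split; apply/eqP.
  nra.
by nra.
Qed.

Theorem mainTheorem6 (R : rcfType) (k : R) (hk : 0 < k) :
  unit_vec (chi_min R) /\
  uncert k (chi_min R) = (7%:R / 32%:R)%:C /\
  (forall chi : 'cV[R[i]]_3, unit_vec chi -> (7%:R / 32%:R)%:C <= uncert k chi).
Proof.
have [h1 h2] := part12 R k.
split=> //; split=> // chi; exact: (part3 R chi k).
Qed.
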